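(* Let $\dot{\mathbf x}=\mathbf f(\sigma,\mathbf x)$ be a multistable regulatory system (MSRS) as defined in the context, with $f_k(\sigma,\mathbf x)=-l(x_k)+\sigma\frac{g(x_k)}{P(x_1,\dots,x_n)+h(x_k)}$, and fix $\sigma>0$. If $\mathbf r=(r_1,\dots,r_n)\in\mathbb R_{>0}^n$ is an equilibrium, then the set $\{r_1,\dots,r_n\}$ has at most two distinct elements.
   Context: A system of ODEs $\frac{dx_k}{dt}=f_k(\sigma,x_1,\dots,x_n)$, $k=1,\dots,n$, is called a multistable regulatory system (MSRS) if $f_k(\sigma,x_1,\dots,x_n)=-l(x_k)+\sigma\frac{g(x_k)}{P(x_1,\dots,x_n)+h(x_k)}$, where $l,g,h$ are real functions of one real variable and $P$ is a real function of $n$ real variables, and: (1) $\sigma$ is a positive parameter; (2) $P$ is symmetric, i.e. unchanged under interchanging any two of its arguments; (3) for every $k$ and every $(x_1,\dots,x_n)\in\mathbb R_{>0}^n$, $P(x_1,\dots,x_n)+h(x_k)>0$; (4) $l(z)\neq 0$ and for every $\sigma>0$ the function $z\mapsto \sigma\frac{g(z)}{l(z)}-h(z)$ has at most one extreme point for $z\in\mathbb R_{>0}$. For a given $\sigma$, a point $\mathbf r\in\mathbb R_{>0}^n$ is an equilibrium if $f_1(\sigma,\mathbf r)=\dots=f_n(\sigma,\mathbf r)=0$.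
   Formalization: The functions l, g and h are also continuous on $\mathbb R_{>0}$, and an extreme point is taken as a non-strict local maximum or minimum of $z\mapsto \sigma\frac{g(z)}{l(z)}-h(z)$ relative to $\mathbb R_{>0}$. Each condition added here is assumed in the paper as well or is needed for the statement above to hold. *)

(* Defs.v *)
From mathcomp Require Import all_boot all_order all_algebra all_fingroup.
From mathcomp Require Import all_classical all_reals all_analysis.
Set Implicit Arguments. Unset Strict Implicit. Unset Printing Implicit Defensive.
Import Order.TTheory GRing.Theory Num.Theory numFieldNormedType.Exports.
Local Open Scope ring_scope.

Section MSRS.
Variables (R : realType) (n : nat).

Definition msrs_f (l g h : R -> R) (P : ('I_n -> R) -> R)
  (sigma : R) (x : 'I_n -> R) (k : 'I_n) : R :=
  - l (x k) + sigma * (g (x k) / (P x + h (x k))).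

Definition is_extreme_point (phi : R -> R) (z : R) : Prop :=
  0 < z /\ exists2 e : R, 0 < e &
    ((forall y, 0 < y -> `|y - z| < e -> phi y <= phi z) \/
     (forall y, 0 < y -> `|y - z| < e -> phi z <= phi y)).

Definition at_most_one_extreme_point (phi : R -> R) : Prop :=
  forall z1 z2, is_extreme_point phi z1 -> is_extreme_point phi z2 -> z1 = z2.

Definition symmetric_fun (P : ('I_n -> R) -> R) : Prop :=
  forall (i j : 'I_n) (x : 'I_n -> R), P (fun k => x (tperm i j k)) = P x.

Definition positive_vec (x : 'I_n -> R) : Prop := forall k, 0 < x k.

(* Conditions (2)-(4) of the definition of an MSRS (condition (1),
   sigma > 0, is imposed on the parameter separately). *)
Definition is_MSRS (l g h : R -> R) (P : ('I_n -> R) -> R) : Prop :=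
  [/\ symmetric_fun P,
      (forall x, positive_vec x -> forall k, 0 < P x + h (x k)),
      (forall z, 0 < z -> l z != 0) &
      (forall sigma, 0 < sigma ->
         at_most_one_extreme_point (fun z => sigma * (g z / l z) - h z))].

Definition is_equilibrium (l g h : R -> R) (P : ('I_n -> R) -> R)
  (sigma : R) (r : 'I_n -> R) : Prop :=
  positive_vec r /\ forall k, msrs_f l g h P sigma r k = 0.

End MSRS.

(* Main.v *)
Require Import Defs.
From mathcomp Require Import all_boot all_order all_algebra all_fingroup.
From mathcomp Require Import all_classical all_reals all_analysis.
From mathcomp Require Import lra.
Import Order.TTheory GRing.Theory Num.Theory numFieldNormedType.Exports.
Set Implicit Arguments. Unset Strict Implicit.
Local Open Scope ring_scope.

Lemma ext_max (R : realType) (phi : R -> R) a b w : 0 < a -> a < w -> w < b ->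
  (forall t, a <= t <= b -> phi t <= phi w) -> is_extreme_point phi w.
Proof.
move=> a0 aw wb H; split; first by apply: lt_trans aw.
exists (Num.min (w - a) (b - w)); first by rewrite lt_min !subr_gt0 aw wb.
left => y y0; rewrite lt_min => /andP[h1 h2]; apply: H.
move: h1 h2; rewrite !ltr_norml => /andP[h1 h2] /andP[h3 h4].
apply/andP; split; lra.
Qed.

Lemma ext_min (R : realType) (phi : R -> R) a b w : 0 < a -> a < w -> w < b ->
  (forall t, a <= t <= b -> phi w <= phi t) -> is_extreme_point phi w.
Proof.
move=> a0 aw wb H; split; first by apply: lt_trans aw.
exists (Num.min (w - a) (b - w)); first by rewrite lt_min !subr_gt0 aw wb.
right => y y0; rewrite lt_min => /andP[h1 h2]; apply: H.
move: h1 h2; rewrite !ltr_norml => /andP[h1 h2] /andP[h3 h4].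
apply/andP; split; lra.
Qed.

Lemma ext_between (R : realType) (phi : R -> R) a b : 0 < a -> a < b ->
  (forall z, 0 < z -> {for z, continuous phi}) -> phi a = phi b ->
  exists z, a < z < b /\ is_extreme_point phi z.
Proof.
move=> a0 ab Hc Hab.
have cw : {within `[a, b], continuous phi}%classic.
  apply: continuous_in_subspaceT => z; rewrite inE /= in_itv /= => /andP[az _].
  apply: Hc; exact: lt_le_trans az.
have [M HM HMmax] := EVT_max (ltW ab) cw.
have [m Hm Hmmin] := EVT_min (ltW ab) cw.
move: HM Hm; rewrite !in_itv /= => /andP[aM Mb] /andP[am mb].
have itv t : a <= t <= b -> t \in `[a, b]%R by rewrite in_itv.
case: (boolP ((a < M) && (M < b))) => [/andP[aM' Mb']|nM].
  exists M; split; first by rewrite aM' Mb'.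
  by apply: (ext_max a0 aM' Mb') => t /itv; apply: HMmax.
have eM : phi M = phi a.
  move: nM; rewrite negb_and -!leNgt => /orP[Ma|bM].
  - by have -> : M = a by apply/le_anti; rewrite Ma aM.
  - by have -> : M = b by apply/le_anti; rewrite bM Mb.
case: (boolP ((a < m) && (m < b))) => [/andP[am' mb']|nm].
  exists m; split; first by rewrite am' mb'.
  by apply: (ext_min a0 am' mb') => t /itv; apply: Hmmin.
have em : phi m = phi a.
  move: nm; rewrite negb_and -!leNgt => /orP[Ma|bM].
  - by have -> : m = a by apply/le_anti; rewrite Ma am.
  - by have -> : m = b by apply/le_anti; rewrite bM mb.
have az : a < (a + b) / 2 by lra.
have zb : (a + b) / 2 < b by lra.
exists ((a + b) / 2); split; first by rewrite az zb.
apply: (ext_max a0 az zb) => t ht.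
apply: (le_trans (HMmax t (itv _ ht))); rewrite eM -em; apply: Hmmin.
by apply: itv; apply/andP; split; apply: ltW.
Qed.

Theorem theorem2 (R : realType) (n : nat) (l g h : R -> R)
  (P : ('I_n -> R) -> R) (sigma : R) (r : 'I_n -> R) :
  is_MSRS l g h P ->
  (forall z : R, 0 < z -> {for z, continuous l}) ->
  (forall z : R, 0 < z -> {for z, continuous g}) ->
  (forall z : R, 0 < z -> {for z, continuous h}) ->
  0 < sigma ->
  is_equilibrium l g h P sigma r ->
  (size (undup [seq r i | i : 'I_n]) <= 2)%N.
Proof.
move=> [Psym Ppos Lnz Hext] cl cg ch s0 [rpos req].
pose phi := fun z => sigma * (g z / l z) - h z.
have Hphi k : phi (r k) = P r.
  have D0 := Ppos r rpos k; have L0 := Lnz _ (rpos k).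
  have := req k; rewrite /msrs_f /phi => e.
  have e2 : sigma * (g (r k) / (P r + h (r k))) = l (r k) by lra.
  have e3 : sigma * g (r k) = l (r k) * (P r + h (r k)).
    by rewrite -e2 mulrA mulfVK // gt_eqF.
  rewrite mulrA e3 [l _ * _]mulrC mulfK //; lra.
have cphi z : 0 < z -> {for z, continuous phi}.
  move=> z0; rewrite /phi.
  apply: continuousB; last exact: ch.
  apply: continuousM; first exact: cst_continuous.
  apply: continuousM; first exact: cg.
  by apply: continuousV; [exact: Lnz | exact: cl].
have Hex := Hext _ s0.
have H3 a b d : 0 < a -> a < b -> b < d -> phi a = P r -> phi b = P r ->
    phi d = P r -> False.
  move=> a0 ab bd pa pb pd.
  have [z1 [/andP[az1 z1b] E1]] := ext_between a0 ab cphi (etrans pa (esym pb)).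
  have b0 : 0 < b by lra.
  have [z2 [/andP[bz2 z2d] E2]] := ext_between b0 bd cphi (etrans pb (esym pd)).
  have := Hex _ _ E1 E2; lra.
rewrite leqNgt; apply/negP => hs.
set s := undup _ in hs.
have us : uniq s by apply: undup_uniq.
have mem i : (i < size s)%N -> exists k, nth 0 s i = r k.
  move=> hi; have := mem_nth 0 hi; rewrite mem_undup => /mapP[k _ ->].
  by exists k.
have h0 : (0 < size s)%N by apply: (@ltn_trans 2).
have h1 : (1 < size s)%N by apply: (@ltn_trans 2).
have [k0 e0] := mem 0%N h0.
have [k1 e1] := mem 1%N h1.
have [k2 e2] := mem 2%N hs.
have d01 : nth 0 s 0 != nth 0 s 1 by rewrite nth_uniq.
have d12 : nth 0 s 1 != nth 0 s 2 by rewrite nth_uniq.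
have d02 : nth 0 s 0 != nth 0 s 2 by rewrite nth_uniq.
rewrite e0 e1 e2 in d01 d12 d02.
have p0 := rpos k0; have p1 := rpos k1; have p2 := rpos k2.
have f0 := Hphi k0; have f1 := Hphi k1; have f2 := Hphi k2.
move: d01 d12 d02 p0 p1 p2 f0 f1 f2.
set x := r k0; set y := r k1; set w := r k2.
move: (P r) H3 => c H3.
clearbody x y w; clear -H3.
move=> d01 d12 d02 p0 p1 p2 f0 f1 f2.
case: (ltgtP x y) d01 => // xy _; case: (ltgtP y w) d12 => // yw _;
  case: (ltgtP x w) d02 => // xw _;
  first [ exact: (H3 x y w) | exact: (H3 x w y) | exact: (H3 y x w)
        | exact: (H3 y w x) | exact: (H3 w x y) | exact: (H3 w y x)
        | (exfalso; clear -xy yw xw; lra) ].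
Qed.
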